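(* Let $n$ be a positive integer, $c\ge2$ an integer, and $b_0\ge b_1\ge\dots\ge b_n\ge0$ as defined in the context. Let $$L'=b_0+\sum_{i=0}^{n-1} b_{\min\{i+c+1,n\}}2^i,\qquad U'=b_0+\sum_{i=0}^{n-1} b_{\max\{i+1-c,0\}}2^i.$$ Then $U'\le 2^{2c}L'$.
   Context: Given $w:\{0,1\}^n\to\mathbb{R}_{\ge0}$, fix an ordering $\sigma_1,\dots,\sigma_{2^n}$ of $\{0,1\}^n$ with $w(\sigma_j)\ge w(\sigma_{j+1})$ for $1\le j<2^n$, and set $b_i=w(\sigma_{2^i})$ for $i=0,\dots,n$. *)

(* Defs.v *)
From mathcomp Require Import all_boot all_order all_algebra.
Set Implicit Arguments. Unset Strict Implicit. Unset Printing Implicit Defensive.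
Import Order.TTheory GRing.Theory Num.Theory.
Local Open Scope ring_scope.

(* An ordering sigma_1,...,sigma_{2^n} of {0,1}^n is a bijection
   sigma : 'I_(2^n) -> n.-tuple bool, with sigma_j (1-indexed) = sigma (j-1). *)

Definition is_ordering (n : nat) (sigma : 'I_(2^n) -> n.-tuple bool) : Prop :=
  bijective sigma.

Definition nonincreasing_along (R : realFieldType) (n : nat)
  (w : n.-tuple bool -> R) (sigma : 'I_(2^n) -> n.-tuple bool) : Prop :=
  forall j k : 'I_(2^n), nat_of_ord k = (nat_of_ord j).+1 -> w (sigma k) <= w (sigma j).

(* b_i = w(sigma_{2^i}) = w(sigma (2^i - 1)) (0-indexed); only meaningful
   for i <= n, where 2^i - 1 < 2^n; we return 0 otherwise (never used). *)
Definition bval (R : realFieldType) (n : nat)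
  (w : n.-tuple bool -> R) (sigma : 'I_(2^n) -> n.-tuple bool) (i : nat) : R :=
  match @insub nat (fun k => (k < 2^n)%N) 'I_(2^n) (2^i - 1)%N with
  | Some j => w (sigma j)
  | None => 0
  end.

(* Main.v *)
Require Import Defs.
From mathcomp Require Import all_boot all_order all_algebra.
From mathcomp Require Import zify ring lra.
Import Order.TTheory GRing.Theory Num.Theory.
Local Open Scope ring_scope.

Section H.
Variables (R : realFieldType) (n : nat) (w : n.-tuple bool -> R)
  (sigma : 'I_(2^n) -> n.-tuple bool).
Hypothesis hw : forall x, 0 <= w x.
Hypothesis hmon : nonincreasing_along w sigma.

Lemma mono_ord (a b : nat) (ha : (a < 2^n)%N) (hb : (b < 2^n)%N) :
  (a <= b)%N -> w (sigma (Ordinal hb)) <= w (sigma (Ordinal ha)).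
Proof.
elim: b hb => [|b IH] hb hab.
  have -> : Ordinal hb = Ordinal ha by apply: val_inj => /=; lia.
  by [].
have [e|ne] := eqVneq a b.+1.
  have -> : Ordinal hb = Ordinal ha by apply: val_inj => /=; lia.
  by [].
have hb' : (b < 2^n)%N by lia.
apply: le_trans (IH hb' _); last by lia.
by apply: hmon.
Qed.

Lemma bval_eq i (hi : (i <= n)%N) :
  exists h : (2^i - 1 < 2^n)%N, bval w sigma i = w (sigma (Ordinal h)).
Proof.
have h : (2^i - 1 < 2^n)%N.
  have : (2^i <= 2^n)%N by rewrite leq_pexp2l.
  have : (0 < 2^i)%N by rewrite expn_gt0.
  lia.
exists h; rewrite /bval insubT /=.
by congr (w (sigma _)); apply: val_inj.
Qed.

Lemma b_anti i j : (i <= j)%N -> (j <= n)%N -> bval w sigma j <= bval w sigma i.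
Proof.
move=> hij hjn.
have [hj ->] := (@bval_eq j hjn).
have [hi ->] := (@bval_eq i (leq_trans hij hjn)).
apply: mono_ord.
have : (2^i <= 2^j)%N by rewrite leq_pexp2l.
lia.
Qed.

Lemma b_ge0 i : 0 <= bval w sigma i.
Proof. by rewrite /bval; case: insub => [j|] //. Qed.

End H.

Theorem lemma2 (R : realFieldType) (n c : nat)
  (w : n.-tuple bool -> R) (sigma : 'I_(2^n) -> n.-tuple bool) :
  (0 < n)%N -> (2 <= c)%N ->
  (forall x, 0 <= w x) ->
  is_ordering sigma ->
  nonincreasing_along w sigma ->
  let b := bval w sigma in
  let L' := b 0%N + \sum_(i < n) b (minn (i + c + 1) n) * 2 ^+ i in
  let U' := b 0%N + \sum_(i < n) b (maxn (i + 1 - c) 0) * 2 ^+ i in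
  U' <= 2 ^+ (2 * c) * L'.
Proof.
move=> hn hc hw _ hmon /=; set b := bval w sigma.
have b0 : forall i, 0 <= b i by move=> i; apply: b_ge0.
have ba : forall i j, (i <= j)%N -> (j <= n)%N -> b j <= b i.
  by move=> i j; apply: b_anti.
rewrite -(big_mkord (fun _ => true) (fun i => b (minn (i + c + 1) n) * 2 ^+ i)) -(big_mkord (fun _ => true) (fun i => b (maxn (i + 1 - c) 0) * 2 ^+ i)).
set m := minn (2 * c) n.
have hm : (m <= n)%N by rewrite geq_minr.
rewrite (big_cat_nat (leq0n m) hm) /=.
rewrite (big_cat_nat (leq0n (n - m)) (leq_subr m n)) /=.
rewrite -{2}[m]add0n big_addn.
set S1 := \sum_(0 <= i < m) _.
set S2 := \sum_(0 <= i < n - m) (b (maxn _ _) * _).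
set T1 := \sum_(0 <= i < n - m) (b (minn _ _) * _).
set T2 := \sum_(n - m <= i < n) _.
have hT2 : 0 <= T2 by apply: sumr_ge0 => i _; apply: mulr_ge0 => //; apply: exprn_ge0.
have hS1 : S1 <= b 0%N * (2 ^+ (2 * c) - 1).
  apply: (@le_trans _ _ (\sum_(0 <= i < 2 * c) b 0%N * 2 ^+ i)).
    apply: (@le_trans _ _ (\sum_(0 <= i < m) b 0%N * 2 ^+ i)).
      apply: ler_sum_nat => i /andP [_ hi]; apply: ler_wpM2r; first exact: exprn_ge0.
      by apply: ba => //; rewrite /m in hi; lia.
    rewrite [X in _ <= X](big_cat_nat (leq0n m) (geq_minl (2*c) n)) /=.
    rewrite lerDl.
    by apply: sumr_ge0 => i _; apply: mulr_ge0 => //; apply: exprn_ge0.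
  rewrite -mulr_sumr; apply: ler_wpM2l => //.
  elim: (2 * c)%N => [|k IH]; first by rewrite big_geq // expr0 subrr.
  rewrite big_nat_recr //= exprS.
  have := IH; have : 0 <= 2 ^+ k :> R by apply: exprn_ge0.
  move=> h1 h2; lra.
have hS2 : S2 <= 2 ^+ (2 * c) * T1.
  rewrite /S2 /T1 mulr_sumr; apply: ler_sum_nat => i /andP [_ hi].
  have hm2 : m = (2 * c)%N by rewrite /m; lia.
  rewrite hm2.
  have -> : (i + 2 * c + 1 - c)%N = minn (i + c + 1) n by lia.
  rewrite maxn0 exprD le_eqVlt; apply/orP; left; apply/eqP; ring.
have hb0 := b0 0%N.
have hp : 0 <= 2 ^+ (2 * c) :> R by apply: exprn_ge0.
have hpT2 : 0 <= 2 ^+ (2 * c) * T2 by apply: mulr_ge0.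
rewrite !mulrDr.
move: hS1 hS2 hpT2; rewrite mulrBr mulr1 [b 0%N * _]mulrC; lra.
Qed.
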